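(* Let $G$ be a torsion-free group, $\mathbb{F}$ a field, $\alpha$ a zero divisor in $\mathbb{F}[G]$ with $|supp(\alpha)|=4$ and $|S_\alpha|=10$, and $\beta$ a mate of $\alpha$. Then one of the following holds: (i) there exist distinct non-trivial $x,y\in G$ and $\alpha'\in\mathbb{F}[G]$ with $supp(\alpha')=\{1,x,x^{-1},y\}$, $\alpha'\beta=0$ and $Z(\alpha,\beta)\cong Z(\alpha',\beta)$; (ii) there exist distinct non-trivial $x,y\in G$ and $\alpha'\in\mathbb{F}[G]$ with $supp(\alpha')=\{1,x,y,xy\}$, $\alpha'\beta=0$ and $Z(\alpha,\beta)\cong Z(\alpha',\beta)$. Furthermore, if $\mathbb{F}=\mathbb{F}_2$, then case (i) occurs.
   Context: $supp(\gamma)=\{x\in G:\gamma_x\ne0\}$; $S_\alpha=\{h^{-1}h':h\ne h',\ h,h'\in supp(\alpha)\}$. A mate of $\alpha$ is a non-zero $\beta$ with $\alpha\beta=0$ of minimal support size among all non-zero $\beta'$ with $\alpha\beta'=0$. For $\gamma\delta=0$, $Z(\gamma,\delta)$ is the multigraph with vertex set $supp(\delta)$ whose edges are the sets $\{(h,h',g,g'),(h',h,g',g)\}$ with $h,h'\in supp(\gamma)$, $g,g'\in supp(\delta)$, $g\ne g'$, $hg=h'g'$, each joining $g$ and $g'$. Isomorphism $\cong$ means a pair of bijections on vertices and on edges preserving adjacency and non-adjacency of vertices and of edges. *)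

(* Defs.v *)
From HB Require Import structures.
From mathcomp Require Import all_boot all_order all_algebra.
From mathcomp Require Import finmap.
Set Implicit Arguments. Unset Strict Implicit. Unset Printing Implicit Defensive.
Import GRing.Theory.
Local Open Scope ring_scope.
Local Open Scope fset_scope.

(* A (possibly infinite) group, given by its carrier (a choiceType, so that
   finitely supported functions on it are available) and its operations. *)
Record grp := Grp {
  gcar :> choiceType;
  gmul : gcar -> gcar -> gcar;
  gone : gcar;
  ginv : gcar -> gcar;
  gmulA : forall x y z, gmul x (gmul y z) = gmul (gmul x y) z;
  gmul1 : forall x, gmul gone x = x;
  gmulV : forall x, gmul (ginv x) x = gone
}.

Section GroupAlgebra.
Variable G : grp.

Fixpoint gpow (x : G) (n : nat) : G :=
  match n with 0 => @gone G | n.+1 => gmul x (gpow x n) end.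

Definition torsion_free : Prop :=
  forall (x : G) (n : nat), x <> @gone G -> (0 < n)%N -> gpow x n <> @gone G.

Variable F : fieldType.

Definition galg := {fsfun G -> F with 0}.

Definition supp (g : galg) : {fset G} := finsupp g.

Definition galg_nz (g : galg) : bool := supp g != fset0.

(* coefficient of x in the product a * b : sum over h g = x of a_h b_g *)
Definition galg_mul_coef (a b : galg) (x : G) : F :=
  \sum_(h <- supp a) a h * b (@gmul G (@ginv G h) x).

Definition galg_mul_zero (a b : galg) : Prop :=
  forall x : G, galg_mul_coef a b x = 0.

Definition zero_divisor (a : galg) : Prop :=
  galg_nz a /\ exists b : galg, galg_nz b /\ galg_mul_zero a b.

Definition S_set (a : galg) : {fset G} :=
  [fset @gmul G (@ginv G p.1) p.2 | p in [fset p in supp a `*` supp a | p.1 != p.2]].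

Definition mate (a b : galg) : Prop :=
  [/\ galg_nz b, galg_mul_zero a b &
      forall b' : galg, galg_nz b' -> galg_mul_zero a b' ->
        (#|` supp b| <= #|` supp b'|)%N].

Definition quad := (G * G * G * G)%type.
Definition qswap (q : quad) : quad :=
  let: (h, h', g, g') := q in (h', h, g', g).

Definition Zquads (c d : galg) : {fset quad} :=
  [fset q in ((supp c `*` supp c) `*` supp d) `*` supp d |
    let: (h, h', g, g') := q in (g != g') && (@gmul G h g == @gmul G h' g')].

Definition Zvert (c d : galg) : {fset G} := supp d.

Definition Zedges (c d : galg) : {fset {fset quad}} :=
  [fset [fset q; qswap q] | q in Zquads c d].

(* the vertices joined by the edge e = {(h,h',g,g'),(h',h,g',g)} are g, g' *)
Definition incident (e : {fset quad}) (v : G) : bool :=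
  [exists q : e, (val q).1.2 == v].

Definition vadj (c d : galg) (u v : G) : bool :=
  (u != v) && [exists e : Zedges c d, incident (val e) u && incident (val e) v].

Definition eadj (c d : galg) (e e' : {fset quad}) : bool :=
  (e != e') && [exists v : Zvert c d, incident e (val v) && incident e' (val v)].

Definition Ziso (c d c' d' : galg) : Prop :=
  exists (phi : G -> G) (psi : {fset quad} -> {fset quad}),
    [/\ {in Zvert c d &, injective phi},
        [fset phi v | v in Zvert c d] = Zvert c' d',
        {in Zedges c d &, injective psi} &
        [fset psi e | e in Zedges c d] = Zedges c' d'] /\
    [/\ (forall u v, u \in Zvert c d -> v \in Zvert c d ->
           vadj c' d' (phi u) (phi v) = vadj c d u v) &
        (forall e e', e \in Zedges c d -> e' \in Zedges c d ->
           eadj c' d' (psi e) (psi e') = eadj c d e e')].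

End GroupAlgebra.

(* Main.v *)
Require Import Defs.
From mathcomp Require Import all_boot all_order all_algebra.
From mathcomp Require Import finmap.
From Stdlib Require Import Classical.
Set Implicit Arguments. Unset Strict Implicit. Unset Printing Implicit Defensive.
Import GRing.Theory.
Local Open Scope ring_scope.
Local Open Scope fset_scope.

Section Grp.
Variable G : grp.
Local Notation "x ** y" := (@gmul G x y) (at level 40, left associativity).
Local Notation "x ^-1" := (@ginv G x).
Local Notation one := (@gone G).

Lemma gmulVr (x : G) : x ** x^-1 = one.
Proof.
rewrite -[x ** _]gmul1 -{1}(gmulV (x^-1)) -gmulA (gmulA x^-1 x) gmulV gmul1.
exact: gmulV.
Qed.

Lemma gmul1r (x : G) : x ** one = x.
Proof. by rewrite -(gmulV x) gmulA gmulVr gmul1. Qed.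

Lemma gmulKg (x y : G) : x^-1 ** (x ** y) = y.
Proof. by rewrite gmulA gmulV gmul1. Qed.

Lemma gmulKVg (x y : G) : x ** (x^-1 ** y) = y.
Proof. by rewrite gmulA gmulVr gmul1. Qed.

Lemma gmulgK (x y : G) : (y ** x) ** x^-1 = y.
Proof. by rewrite -gmulA gmulVr gmul1r. Qed.

Lemma gmulI (x y z : G) : x ** y = x ** z -> y = z.
Proof. by move=> h; rewrite -(gmulKg x y) h gmulKg. Qed.

Lemma gmulIg (x y z : G) : y ** x = z ** x -> y = z.
Proof. by move=> h; rewrite -(gmulgK x y) h gmulgK. Qed.

Lemma ginvK (x : G) : (x^-1)^-1 = x.
Proof. by apply: (@gmulIg x^-1); rewrite gmulV gmulVr. Qed.

Lemma ginvM (x y : G) : (x ** y)^-1 = y^-1 ** x^-1.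
Proof. by apply: (@gmulIg (x ** y)); rewrite gmulV -gmulA gmulKg gmulV. Qed.

Lemma ginv1 : one^-1 = one.
Proof. by rewrite -{2}(gmulV one) gmul1r. Qed.

Lemma geq_mulL (s z w : G) : (s ** z == w) = (z == s^-1 ** w).
Proof.
by apply/eqP/eqP => [<-|->]; rewrite ?gmulKg ?gmulKVg.
Qed.

Lemma gmul_eq1 (x y : G) : (x ** y == one) = (y == x^-1).
Proof. by rewrite geq_mulL gmul1r. Qed.

Lemma ginv_eq1 (x : G) : (x^-1 == one) = (x == one).
Proof. by apply/eqP/eqP => [h|->]; rewrite ?ginv1 // -(ginvK x) h ginv1. Qed.

Lemma iter_gpow (v p : G) k : iter k (gmul v) p = gpow v k ** p.
Proof. by elim: k => [|k IH] /=; rewrite ?gmul1 // IH gmulA. Qed.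

Lemma inv_fun0 (F : fieldType) (f : G -> F) (S : {fset G}) (u : G) :
  torsion_free G -> u != one -> (forall w, f w != 0 -> w \in S) ->
  (forall z, f (u^-1 ** z) = f z) -> forall z, f z = 0.
Proof.
move=> tf u1 fS finv z; apply/eqP; apply/negPn/negP => fz.
pose w n := iter n (gmul u^-1) z.
have fw n : f (w n) = f z by elim: n => //= n IH; rewrite finv.
have wS n : w n \in S by apply: fS; rewrite fw.
pose g (i : 'I_(#|` S|).+1) : S := [` wS i].
have [inj|] := boolP (injectiveb g).
  have := leq_card g (injectiveP _ inj); rewrite card_ord -cardfE.
  by rewrite ltnn.
case/injectivePn => i [j ij /(congr1 val) /= eqw].
wlog lij : i j ij eqw / (i < j)%N.
  move=> H; case: (ltngtP i j) => [l|l|/val_inj e]; first exact: H l.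
    by apply: (H j i) => //; rewrite eq_sym.
  by rewrite e eqxx in ij.
have : w j = w i by [].
rewrite /w -(subnK (ltnW lij)) iterD -/(w i) iter_gpow.
rewrite -[X in _ = X]gmul1 => /gmulIg.
apply: tf; last by rewrite subn_gt0.
by apply/eqP; rewrite ginv_eq1.
Qed.
End Grp.
Local Open Scope ring_scope.
Local Open Scope fset_scope.

Section Trans.
Variables (G : grp) (F : fieldType).
Local Notation "x ** y" := (@gmul G x y) (at level 40, left associativity).
Local Notation "x ^-1" := (@ginv G x).
Local Notation one := (@gone G).

Lemma in_supp (a : galg G F) z : (z \in supp a) = (a z != 0).
Proof. by rewrite /supp mem_finsupp. Qed.

Definition tr (s : G) (a : galg G F) : galg G F :=
  [fsfun z in [fset s^-1 ** h | h in supp a] => a (s ** z)].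

Lemma trE s a z : tr s a z = a (s ** z).
Proof.
rewrite /tr fsfunE; case: ifPn => // zN.
apply/eqP; rewrite eq_sym; apply/negPn/negP => nz.
case/negP: zN; apply/imfsetP; exists (s ** z); first by rewrite in_supp.
by rewrite gmulKg.
Qed.

Lemma supp_tr s a z : (z \in supp (tr s a)) = (s ** z \in supp a).
Proof. by rewrite !in_supp trE. Qed.

Lemma supp_trE s a : supp (tr s a) = [fset s^-1 ** h | h in supp a].
Proof.
apply/fsetP => z; rewrite supp_tr; apply/idP/imfsetP => [h|[h hA ->]].
  by exists (s ** z); rewrite ?gmulKg.
by rewrite gmulKVg.
Qed.

Lemma tr_mul s a b : galg_mul_zero a b -> galg_mul_zero (tr s a) b.
Proof.
move=> ab x; rewrite /galg_mul_coef supp_trE big_imfset /=; last first.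
  by move=> u v _ _; apply: gmulI.
transitivity (galg_mul_coef a b (s ** x)); last exact: ab.
rewrite /galg_mul_coef; apply: eq_bigr => h _.
by rewrite trE gmulKVg ginvM ginvK -gmulA.
Qed.

End Trans.

Lemma exP (T : choiceType) (X : {fset T}) (P : pred T) :
  reflect (exists2 x, x \in X & P x) [exists x : X, P (val x)].
Proof.
apply: (iffP existsP) => [[x Px]|[x xX Px]]; first by exists (val x) => //; apply: valP.
by exists [` xX].
Qed.

Section Ziso.
Variables (G : grp) (F : fieldType) (s : G).
Local Notation "x ** y" := (@gmul G x y) (at level 40, left associativity).
Local Notation "x ^-1" := (@ginv G x).
Local Notation one := (@gone G).

Definition tq (q : quad G) : quad G :=
  let: (h, h', g, g') := q in (s^-1 ** h, s^-1 ** h', g, g').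
Definition uq (q : quad G) : quad G :=
  let: (h, h', g, g') := q in (s ** h, s ** h', g, g').

Lemma tqK : cancel tq uq.
Proof. by case=> [[[h h'] g] g'] /=; rewrite !gmulKVg. Qed.
Lemma uqK : cancel uq tq.
Proof. by case=> [[[h h'] g] g'] /=; rewrite !gmulKg. Qed.
Lemma tq_inj : injective tq. Proof. exact: can_inj tqK. Qed.

Lemma mem_tq (A : {fset quad G}) x : (x \in [fset tq q | q in A]) = (uq x \in A).
Proof. by rewrite -{1}(uqK x) (mem_imfset _ _ tq_inj). Qed.

Lemma uq_eq x y : (uq x == y) = (x == tq y).
Proof. by apply/eqP/eqP => [<-|->]; rewrite ?uqK ?tqK. Qed.

Lemma tq_swap q : tq (qswap q) = qswap (tq q).
Proof. by case: q => [[[h h'] g] g']. Qed.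
Lemma uq_swap q : uq (qswap q) = qswap (uq q).
Proof. by case: q => [[[h h'] g] g']. Qed.

Lemma gmul_eq (x y z : G) : (x ** y == x ** z) = (y == z).
Proof. by apply/eqP/eqP => [/gmulI|->]. Qed.

Definition psi (e : {fset quad G}) := [fset tq q | q in e].

Lemma psi_inj : injective psi.
Proof.
move=> e e' H; apply/fsetP => q.
by have := congr1 (fun A => tq q \in A) H; rewrite /= /psi !mem_tq !tqK.
Qed.

Lemma psi2 q : psi [fset q; qswap q] = [fset tq q; qswap (tq q)].
Proof.
apply/fsetP => x; rewrite /psi mem_tq !inE !uq_eq tq_swap.
by [].
Qed.

Lemma incident_psi e v : incident (psi e) v = incident e v.
Proof.
rewrite /incident; apply/(@exP _ _ (fun q : quad G => q.1.2 == v))/(@exP _ _ (fun q : quad G => q.1.2 == v)) => [[x]|[x xe xv]].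
  by rewrite /psi mem_tq => xe xv; exists (uq x) => //; case: x xe xv => [[[h h'] g] g'].
exists (tq x); first by rewrite /psi mem_tq tqK.
by case: x xe xv => [[[h h'] g] g'].
Qed.

Variables (a b : galg G F).

Lemma Zquads_tr : Zquads (tr s a) b = [fset tq q | q in Zquads a b].
Proof.
apply/fsetP => q; rewrite mem_tq; case: q => [[[h h'] g] g'].
rewrite /Zquads !inE /= !supp_tr.
by rewrite -gmulA -(gmulA s h') gmul_eq.
Qed.

Lemma Zedges_tr : Zedges (tr s a) b = [fset psi e | e in Zedges a b].
Proof.
apply/fsetP => E; apply/imfsetP/imfsetP => [[q]|[e /imfsetP [q qZ ->] ->]].
  rewrite Zquads_tr => /imfsetP [q0 q0Z ->] ->.
  by exists [fset q0; qswap q0]; [apply/imfsetP; exists q0 | rewrite psi2].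
exists (tq q); last by rewrite psi2.
by rewrite Zquads_tr; apply/imfsetP; exists q.
Qed.

Lemma Ziso_tr : Ziso a b (tr s a) b.
Proof.
exists id, psi; split; split.
- by move=> u v _ _.
- by apply/fsetP => v; apply/imfsetP/idP => [[w wZ ->]|vZ] //; exists v.
- by move=> e e' _ _; apply: psi_inj.
- by rewrite Zedges_tr.
- move=> u v _ _; rewrite /vadj; congr (_ && _).
  apply/(@exP _ _ (fun e => incident e u && incident e v))/(@exP _ _ (fun e => incident e u && incident e v)) => [[E]|[e eZ]].
    rewrite Zedges_tr => /imfsetP [e eZ ->].
    by rewrite !incident_psi => H; exists e.
  move=> H; exists (psi e); last by rewrite !incident_psi.
  by rewrite Zedges_tr; apply/imfsetP; exists e.
- move=> e e' _ _; rewrite /eadj (inj_eq psi_inj).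
  by congr (_ && _); apply: eq_existsb => v; rewrite !incident_psi.
Qed.

End Ziso.
Local Open Scope fset_scope.

Lemma cardP (T : choiceType) (A : {fset T}) :
  #|` [fset p in A `*` A | p.1 != p.2]| = (#|` A| * (#|` A|).-1)%N.
Proof.
rewrite card_fset_sum1 big_fset /= big_mkcond /=.
rewrite big_imfset2 /=; last by move=> [? ?] [? ?] _ _ /= [-> ->].
rewrite (eq_big_seq (fun _ => (#|` A|).-1)); last first.
  move=> a aA; rewrite (big_fsetD1 a) //= eqxx add0n.
  rewrite (cardfsD1 a) aA /= card_fset_sum1 big_seq_cond [RHS]big_seq_cond.
  by apply: eq_bigr => b; rewrite !inE => /andP [/andP [/negPf ba _] _]; rewrite eq_sym ba.
rewrite big_const_seq count_predT iter_addn_0 mulnC. exact: erefl.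
Qed.
Local Open Scope fset_scope.

Section Comb.
Variable (T : choiceType).
Implicit Types (A : {fset T}) (a b c d : T).

Lemma fset3E a b c : [fset a; b; c] = a |` (b |` [fset c]).
Proof. by apply/fsetP => z; rewrite !inE orbA. Qed.
Lemma fset4E a b c d : [fset a; b; c; d] = a |` (b |` (c |` [fset d])).
Proof. by apply/fsetP => z; rewrite !inE !orbA. Qed.

Lemma eq4 A a b c d : #|` A| = 4 -> a \in A -> b \in A -> c \in A -> d \in A ->
  [&& a != b, a != c, a != d, b != c, b != d & c != d] ->
  A = [fset a; b; c; d].
Proof.
move=> cA aA bA cA' dA /and5P [ab ac ad bc /andP [bd cd]].
apply/eqP; rewrite eq_sym eqEfcard; apply/andP; split.
  by apply/fsubsetP => z; rewrite fset4E !inE => /or4P [] /eqP ->.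
rewrite cA fset4E !cardfsU1 cardfs1 !inE.
by rewrite (negPf ab) (negPf ac) (negPf ad) (negPf bc) (negPf bd) (negPf cd).
Qed.

Lemma fill4 A a b c : #|` A| = 4 -> a \in A -> b \in A -> c \in A ->
  [&& a != b, a != c & b != c] ->
  exists e, [/\ e \in A, A = [fset a; b; c; e] & [&& e != a, e != b & e != c]].
Proof.
move=> cA aA bA cA' /and3P [ab ac bc].
have : ~~ (A `<=` [fset a; b; c]).
  apply/negP => /fsubset_leq_card; rewrite cA fset3E !cardfsU1 cardfs1.
  by case: (_ \notin _); case: (_ \notin _).
case/fsubsetPn => e eA; rewrite fset3E !inE => /norP [ea /norP [eb ec]].
have ne : [&& e != a, e != b & e != c] by rewrite ea eb ec.
exists e; split => //; rewrite fsetUA; apply: (eq4 cA aA bA cA' eA).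
by rewrite ab ac bc !(eq_sym _ e) ea eb ec.
Qed.
End Comb.
Local Open Scope fset_scope.

Section Cases.
Variable G : grp.
Local Notation "x ** y" := (@gmul G x y) (at level 40, left associativity).
Local Notation "x ^-1" := (@ginv G x).
Local Notation one := (@gone G).

Definition CI (A : {fset G}) := exists s x y,
  [/\ x != y, x != one & y != one] /\
  forall z, (s ** z \in A) = (z \in [fset one; x; x^-1; y]).
Definition CII (A : {fset G}) := exists s x y,
  [/\ x != y, x != one, y != one & x ** y != one] /\
  forall z, (s ** z \in A) = (z \in [fset one; x; y; x ** y]).

Lemma mkCI A s a d : #|` A| = 4 -> s \in A -> a \in A -> d \in A ->
  [&& s != a, s != d & a != d] -> (s^-1 ** a)^-1 = s^-1 ** d -> CI A.
Proof.
move=> cA sA aA dA dist hinv.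
have [e [eA AE /and3P [es ea ed]]] := fill4 cA sA aA dA dist.
exists s, (s^-1 ** a), (s^-1 ** e); split.
  case/and3P: dist => sa sd ad.
  by rewrite gmul_eq !gmul_eq1 !ginvK; split; rewrite // eq_sym.
move=> z; rewrite AE hinv !inE !geq_mulL gmulV.
by [].
Qed.


Lemma cases (F : fieldType) (al : galg G F) :
  torsion_free G -> #|` supp al| = 4 -> #|` S_set al| = 10 ->
  CI (supp al) \/ CII (supp al).
Proof.
move=> tf cA cS; set A := supp al.
pose P := [fset p in A `*` A | p.1 != p.2].
pose f := fun p : G * G => (p.1)^-1 ** p.2.
have cP : #|` P| = 12 by rewrite /P cardP cA.
have : exists p q, [/\ p \in P, q \in P, p != q & f p = f q].
  apply: NNPP => H.
  have inj : {in P &, injective f}.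
    move=> p q pP qP fpq; apply/eqP; apply: contraT => pq; case: H.
    by exists p, q.
  move/card_in_imfsetP: inj; rewrite cP.
  by move: cS; rewrite /S_set -/A -/P => ->.
case=> [[a b] [[c d] [pP qP pq]]]; rewrite /f /= => e.
move: pP qP; rewrite !inE /= => /andP [/andP [aA bA] ab] /andP [/andP [cA' dA] cd].
move: pq; rewrite xpair_eqE => pq.
have nac : a != c.
  apply: contraNneq pq => ac; subst c; move/gmulI: e => ->; by rewrite !eqxx.
have nbd : b != d.
  apply: contraNneq pq => bd; subst d; move/gmulIg: e => e.
  by rewrite -(ginvK a) e ginvK !eqxx.
case: (eqVneq a d) => [ad | nad]; case: (eqVneq b c) => [bc | nbc].
- subst d c; exfalso.
  have := tf (a^-1 ** b) 2; apply.
  + by apply/eqP; rewrite gmul_eq1 ginvK eq_sym.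
  + by [].
  by rewrite /= gmul1r {2}e -gmulA gmulKVg gmulV.
- subst d; left; apply: (@mkCI A a b c) => //.
  + by rewrite ab nac nbc.
  + by rewrite e ginvM ginvK.
- subst c; left; apply: (@mkCI A b a d) => //.
  + by rewrite eq_sym ab nbd nad.
  + by rewrite ginvM ginvK.
- right; exists c, (c^-1 ** a), (c^-1 ** d).
  have xyE : (c^-1 ** a) ** (c^-1 ** d) = c^-1 ** b by rewrite -e -gmulA gmulKVg.
  have AE : A = [fset c; a; d; b].
    apply: eq4 => //.
    by rewrite eq_sym nac cd eq_sym nbc nad ab eq_sym nbd.
  split.
    by rewrite xyE gmul_eq !gmul_eq1 !ginvK nad; split; rewrite // eq_sym.
  by move=> z; rewrite AE xyE !inE !geq_mulL gmulV.
Qed.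

End Cases.
Local Open Scope fset_scope.
Local Open Scope ring_scope.

Section F2.
Variables (G : grp) (F : fieldType).
Local Notation "x ** y" := (@gmul G x y) (at level 40, left associativity).
Local Notation "x ^-1" := (@ginv G x).
Local Notation one := (@gone G).

Lemma gmul_eqr (x y z : G) : (y ** x == z ** x) = (y == z).
Proof. by apply/eqP/eqP => [/gmulIg|->]. Qed.

Lemma f2_noCII (al be : galg G F) (x y : G) :
  torsion_free G -> (forall c : F, c = 0 \/ c = 1) ->
  x != y -> x != one -> y != one -> x ** y != one ->
  (forall z, (z \in supp al) = (z \in [fset one; x; y; x ** y])) ->
  galg_mul_zero al be -> galg_nz be -> False.
Proof.
move=> tf F2 xy x1 y1 xy1 Hm mz bnz.
have suppE : supp al = one |` (x |` (y |` [fset x ** y])).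
  by apply/fsetP => z; rewrite Hm !inE !orbA.
have al1 h : h \in supp al -> al h = 1.
  by rewrite in_supp; case: (F2 (al h)) => ->; rewrite ?eqxx.
have Esum z : (be z + be (x^-1 ** z) + be (y^-1 ** z) + be (y^-1 ** (x^-1 ** z)) = 0).
  have := mz z; rewrite /galg_mul_coef.
  rewrite (eq_big_seq (fun h => be (h^-1 ** z))); last first.
    by move=> h hs; rewrite al1 // mul1r.
  rewrite suppE !big_fsetU1 ?big_seq_fset1 /=.
  - by rewrite ginv1 gmul1 ginvM -gmulA !addrA.
  - by rewrite !inE -{1}(gmul1 y) gmul_eqr eq_sym.
  - by rewrite !inE negb_or xy -{1}(gmul1r x) gmul_eq eq_sym.
  - by rewrite !inE !negb_or !(eq_sym one) x1 y1.
have two : (1 + 1 : F) = 0.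
  case: (F2 (1 + 1)) => // h; exfalso.
  have : (1 : F) = 0 by apply: (@addrI _ 1); rewrite h addr0.
  by move/eqP; rewrite oner_eq0.
have c2 (u v : F) : (u + v = 0) -> v = u.
  move=> h; have uu : (u + u = 0) by rewrite -[u]mulr1 -mulrDr two mulr0.
  by rewrite -[v]add0r -uu -addrA h addr0.
pose ga w := (be w + be (y^-1 ** w)).
have ga_inv z : ga (x^-1 ** z) = ga z.
  by apply: c2; rewrite /ga addrACA !addrA; apply: Esum.
have gaS w : ga w != 0 -> w \in supp be `|` [fset y ** g | g in supp be].
  move=> nz; rewrite inE; case: (boolP (be w != 0)) => [bw|]; first by rewrite in_supp bw.
  rewrite negbK /ga => /eqP bw0; move: nz; rewrite /ga bw0 add0r => nz.
  by apply/orP; right; apply/imfsetP; exists (y^-1 ** w); rewrite ?in_supp ?gmulKVg.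
have ga0 := inv_fun0 tf x1 gaS ga_inv.
have be_inv z : be (y^-1 ** z) = be z by apply: c2; apply: ga0.
have bS w : be w != 0 -> w \in supp be by rewrite in_supp.
have be0 := inv_fun0 tf y1 bS be_inv.
by move: bnz; rewrite /galg_nz => /fset0Pn [w]; rewrite in_supp be0 eqxx.
Qed.
End F2.

Local Open Scope ring_scope.
Local Open Scope fset_scope.

Theorem mainTheorem13 (G : grp) (F : fieldType) (alpha beta : galg G F) :
  torsion_free G ->
  zero_divisor alpha ->
  #|` supp alpha| = 4%N ->
  #|` S_set alpha| = 10%N ->
  mate alpha beta ->
  let case_i :=
    exists (x y : G) (alpha' : galg G F),
      [/\ x != y, x != @gone G & y != @gone G] /\
      [/\           supp alpha' = [fset @gone G; x; @ginv G x; y],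
          galg_mul_zero alpha' beta &
          Ziso alpha beta alpha' beta] in
  let case_ii :=
    exists (x y : G) (alpha' : galg G F),
      [/\ x != y, x != @gone G & y != @gone G] /\
      [/\           supp alpha' = [fset @gone G; x; y; @gmul G x y],
          galg_mul_zero alpha' beta &
          Ziso alpha beta alpha' beta] in
  (case_i \/ case_ii) /\
  ((forall c : F, c = 0 \/ c = 1) -> case_i).
Proof.
move=> tf _ cA cS [bnz mz _] case_i case_ii.
have HI : CI (supp alpha) -> case_i.
  case=> [s [x [y [[xy x1 y1] Hm]]]]; exists x, y, (tr s alpha); split => //; split.
  - by apply/fsetP => z; rewrite supp_tr Hm.
  - exact: tr_mul.
  - exact: Ziso_tr.
have HII : CII (supp alpha) -> case_ii.
  case=> [s [x [y [[xy x1 y1 _] Hm]]]]; exists x, y, (tr s alpha); split => //; split.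
  - by apply/fsetP => z; rewrite supp_tr Hm.
  - exact: tr_mul.
  - exact: Ziso_tr.
split; first by case: (cases tf cA cS) => [/HI|/HII]; [left|right].
move=> F2; case: (cases tf cA cS) => [/HI //|].
case=> [s [x [y [[xy x1 y1 xy1] Hm]]]]; exfalso.
apply: (@f2_noCII G F (tr s alpha) beta x y tf F2 xy x1 y1 xy1) => //.
- by move=> z; rewrite supp_tr Hm.
- exact: tr_mul.
Qed.
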